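(* Let $\mathcal{X}$ be finite, $\mathcal{F}\subseteq\mathcal{F}^+\subseteq(\mathcal{X}\to[-1,1])$, $\mathcal{Z}=\mathcal{X}\times[-1,1]$, decision space $\Pi=\mathcal{F}^+$, and consider the regression loss with a base loss $\mathrm{L}:[-1,1]^2\to[0,1]$ that is $1$-Lipschitz in its second argument. Then $N_{\mathsf{frac}}(\mathcal{M}_{\mathsf{agnostic}};\Delta)\le N_{\mathsf{frac}}(\mathcal{F},\mathcal{F}^+;\Delta)$ for all $\Delta>0$. If moreover $\mathrm{L}(y,y')=|y-y'|$ is the absolute loss, then for all $\Delta>0$, $$N_{\mathsf{frac}}(\mathcal{M}_{\mathsf{agnostic}};\Delta)=N_{\mathsf{frac}}(\mathcal{M}_{\mathcal{F},\mathsf{realizable}};\Delta)=N_{\mathsf{frac}}(\mathcal{F},\mathcal{F}^+;\Delta).$$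
   Context: For $M\in\Delta(\mathcal{Z})$ and $f\in\mathcal{F}^+$, the regression loss is $L(M,f)=\mathbb{E}_{(x,y)\sim M}\mathrm{L}(y,f(x))-\min_{f^\star\in\mathcal{F}}\mathbb{E}_{(x,y)\sim M}\mathrm{L}(y,f^\star(x))$ (the minimum is assumed attained). $\mathcal{M}_{\mathsf{agnostic}}=\Delta(\mathcal{Z})$; $\mathcal{M}_{\mathcal{F},\mathsf{realizable}}$ is the set of $M\in\Delta(\mathcal{Z})$ for which there is $f_M\in\mathcal{F}$ with $y=f_M(x)$ almost surely under $M$. For a model class $\mathcal{M}$, $N_{\mathsf{frac}}(\mathcal{M};\Delta)=\inf_{p\in\Delta(\Pi)}\sup_{M\in\mathcal{M}}\frac1{p(\{\pi:L(M,\pi)\le\Delta\})}$, and $N_{\mathsf{frac}}(\mathcal{F},\mathcal{F}^+;\Delta)=\inf_{p\in\Delta(\mathcal{F}^+)}\sup_{\mu\in\Delta(\mathcal{X}),f^\star\in\mathcal{F}}\frac1{p(\{f:\mathbb{E}_{x\sim\mu}|f(x)-f^\star(x)|\le\Delta\})}$. *)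

(* Defs.v *)
From HB Require Import structures.
From mathcomp Require Import all_boot all_order all_algebra.
From mathcomp Require Import all_classical all_reals all_analysis.
Import Order.TTheory GRing.Theory Num.Theory.
Local Open Scope classical_set_scope.
Local Open Scope ring_scope.

(* The finite instance space X, as a (pointed) measurable type with   *)
(* the discrete sigma-algebra.  A point x0 is needed because every     *)
(* measurableType of MathComp-Analysis is pointed.                     *)
Definition ptfin (X : finType) (x0 : X) : Type := X.
Arguments ptfin {X} x0.
Section ptfin.
Variables (X : finType) (x0 : X).
HB.instance Definition _ := Finite.on (ptfin x0).
HB.instance Definition _ := isPointed.Build (ptfin x0) x0.
HB.instance Definition _ := @isMeasurable.Build default_measure_display
  (ptfin x0) discrete_measurable discrete_measurable0
  discrete_measurableC discrete_measurableU.
End ptfin.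

(* The observation space: pairs (x, y) in X * R, with the product of  *)
(* the discrete sigma-algebra and the Borel sigma-algebra of R.        *)
(* Z = X x [-1,1] is the measurable subset Zset of it.                 *)
Definition Zty (R : realType) {X : finType} (x0 : X) : measurableType _ :=
  (ptfin x0 * R)%type.

Definition Zset {R : realType} {X : finType} (x0 : X) : set (Zty R x0) :=
  [set z | -1 <= z.2 <= 1].

(* The space of all functions X -> R, with the Borel sigma-algebra of *)
(* R^X (generated by the evaluation maps f |-> f x).                  *)
Definition fnsp (X : finType) (R : realType) : Type := X -> R.
HB.instance Definition _ (X : finType) (R : realType) :=
  Choice.on (fnsp X R).
HB.instance Definition _ (X : finType) (R : realType) :=
  isPointed.Build (fnsp X R) (fun=> 0).

Definition evalgen (X : finType) (R : realType) : set (set (fnsp X R)) :=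
  [set A | exists (x : X) (B : set R), measurable B /\
           A = (fun f : fnsp X R => f x) @^-1` B].

Definition Fn (X : finType) (R : realType) : measurableType _ :=
  g_sigma_algebraType (@evalgen X R).

Definition cube {X : finType} {R : realType} : set (Fn X R) :=
  [set f | forall x, -1 <= f x <= 1].

(* Delta(Pi) for Pi = FP (a subset of X -> [-1,1]): Borel probability *)
(* measures on R^X whose outer measure of FP is one, i.e. probability  *)
(* measures on FP with its trace sigma-algebra.                        *)
Definition DeltaPi {X : finType} {R : realType} (FP : set (X -> R))
  : set (probability (Fn X R) R) :=
  [set p | forall A : set (Fn X R), measurable A -> FP `<=` A -> p A = 1%E].

(* 1/x on [0, +oo], with 1/0 = +oo *)
Definition recip {R : realType} (x : \bar R) : \bar R :=
  match x with
  | EFin r => if 0 < r then (r^-1)%:E else +oo%E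
  | +oo%E => 0%E
  | -oo%E => +oo%E
  end.

(* Regression loss.  L is the base loss (only its values on [-1,1]^2   *)
(* matter).                                                            *)
Definition Rloss {R : realType} {X : finType} {x0 : X} (L : R -> R -> R)
  (M : probability (Zty R x0) R) (f : X -> R) : \bar R :=
  (\int[M]_(z in Zset x0) (L z.2 (f z.1))%:E)%E.

Definition regloss {R : realType} {X : finType} {x0 : X} (L : R -> R -> R)
  (F : set (X -> R)) (M : probability (Zty R x0) R) (f : X -> R) : \bar R :=
  (Rloss L M f - ereal_inf [set Rloss L M g | g in F])%E.

Definition agnostic (R : realType) {X : finType} (x0 : X)
  : set (probability (Zty R x0) R) :=
  [set M | M (Zset x0) = 1%E].

Definition realizable {R : realType} {X : finType} (x0 : X) (F : set (X -> R))
  : set (probability (Zty R x0) R) :=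
  [set M | agnostic R x0 M /\
     exists fM, F fM /\ M [set z : Zty R x0 | z.2 = fM z.1] = 1%E].

Definition Nfrac_models {R : realType} {X : finType} {x0 : X}
  (L : R -> R -> R) (F FP : set (X -> R))
  (Mclass : set (probability (Zty R x0) R)) (Delta : R) : \bar R :=
  ereal_inf [set ereal_sup
     [set recip (p [set f : Fn X R | cube f /\
                      (regloss L F M f <= Delta%:E)%E]) | M in Mclass]
   | p in DeltaPi FP].

Definition simplex {R : realType} {X : finType} : set (X -> R) :=
  [set mu | (forall x, 0 <= mu x) /\ \sum_(x : X) mu x = 1].

Definition Nfrac_fun {R : realType} {X : finType} (F FP : set (X -> R))
  (Delta : R) : \bar R :=
  ereal_inf [set ereal_sup
     [set recip (p [set f : Fn X R | cube f /\
                      \sum_(x : X) mu_fs.1 x * `|f x - mu_fs.2 x| <= Delta])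
      | mu_fs in [set mu_fs : (X -> R) * (X -> R) |
                    simplex mu_fs.1 /\ F mu_fs.2]]
   | p in DeltaPi FP].

(* Main.v *)
Require Import Defs.
From HB Require Import structures.
From mathcomp Require Import all_boot all_order all_algebra.
From mathcomp Require Import all_classical all_reals all_analysis measurable_realfun.
From mathcomp Require Import lra.
Import Order.TTheory GRing.Theory Num.Theory numFieldNormedType.Exports.
Local Open Scope classical_set_scope.
Local Open Scope ring_scope.

Section fnmeas.
Variables (X : finType) (R : realType).

Lemma ev_meas (x : X) : measurable_fun [set: Fn X R] (fun f : Fn X R => f x).
Proof.
move=> _ B mB; rewrite setTI; apply: sub_sigma_algebra.
by exists x, B.
Qed.

Lemma cube_meas : measurable (@cube X R).
Proof.
have -> : (@cube X R) = \bigcap_(x in [set: X]) ((fun f : Fn X R => f x) @^-1` `[-1, 1]).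
  apply/seteqP; split => f /=.
    by move=> Hf x _ /=; rewrite in_itv /=; exact: Hf.
  by move=> Hf x; have := Hf x I; rewrite /= in_itv.
apply: fin_bigcap_measurable; first exact: finite_finset.
move=> x _; have := ev_meas x measurableT _ (measurable_itv `[-1, 1]).
by rewrite setTI.
Qed.
End fnmeas.

Section zmeas.
Variables (R : realType) (X : finType) (x0 : X).
Local Notation T := (Zty R x0).

Lemma Zset_eq : (Zset x0 : set T) = snd @^-1` `[-1, 1].
Proof. by apply/seteqP; split => z /=; rewrite in_itv. Qed.

Lemma Zset_meas : measurable (Zset x0 : set T).
Proof.
rewrite Zset_eq; have := @measurable_snd _ _ (ptfin x0) R measurableT _ (measurable_itv `[-1, 1]).
by rewrite setTI.
Qed.

Lemma fst_meas (D : set T) (h : X -> R) : measurable_fun D (fun z : T => h z.1).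
Proof.
apply: measurable_funTS.
apply: (@measurableT_comp _ _ _ _ _ _ (h : ptfin x0 -> R)); last exact: measurable_fst.
by move=> _ Y _.
Qed.

Lemma snd_meas (g : R -> R) : measurable_fun (`[-1, 1] : set R) g ->
  measurable_fun (Zset x0) (fun z : T => g z.2).
Proof.
move=> mg.
apply: (@measurable_comp _ _ _ _ _ _ (`[-1, 1] : set R) g (Zset x0) snd) => //.
- by move=> y [z /= Hz <-]; rewrite in_itv.
- exact: measurable_funTS measurable_snd.
Qed.
End zmeas.

Section dec.
Variables (R : realType) (X : finType) (x0 : X).
Local Notation T := (Zty R x0).
Variables (L : R -> R -> R) (M : probability T R).
Hypothesis HL0 : forall y t, -1 <= y <= 1 -> -1 <= t <= 1 -> 0 <= L y t <= 2.
Hypothesis HLip : forall y t t', -1 <= y <= 1 -> -1 <= t <= 1 -> -1 <= t' <= 1 ->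
        `|L y t - L y t'| <= `|t - t'|.
Hypothesis HLm : forall t : R, -1 <= t <= 1 ->
        measurable_fun (`[-1, 1] : set R) (fun y : R => L y t).
Hypothesis HM : M (Zset x0) = 1%E.

Definition Ex (x : X) (t : R) : \bar R :=
  (\int[M]_(z in Zset x0) ((z.1 == x)%:R * L z.2 t)%:E)%E.
Definition mass (x : X) : \bar R :=
  (\int[M]_(z in Zset x0) ((z.1 == x)%:R)%:E)%E.

Lemma sum_ind (z : X) (F : X -> R) : \sum_(x : X) (z == x)%:R * F x = F z.
Proof.
rewrite (bigD1 z) //= eqxx mul1r big1 ?addr0 // => y Hy.
by rewrite eq_sym (negbTE Hy) mul0r.
Qed.

Lemma mEx (x : X) t : -1 <= t <= 1 ->
  measurable_fun (Zset x0) (fun z : T => (((z.1 == x)%:R * L z.2 t)%:E : \bar R)).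
Proof.
move=> Ht; apply/measurable_EFinP; apply: measurable_funM.
  exact: (@fst_meas R X x0 _ (fun a : X => (a == x)%:R)).
exact: (@snd_meas R X x0 (fun y => L y t) (HLm _ Ht)).
Qed.

Lemma mmass (x : X) :
  measurable_fun (Zset x0) (fun z : T => (((z.1 == x)%:R : R)%:E : \bar R)).
Proof. by apply/measurable_EFinP; exact: (@fst_meas R X x0 _ (fun a : X => (a == x)%:R)). Qed.

Lemma ind_ge0 (a b : X) : 0 <= ((a == b)%:R : R).
Proof. by case: (a == b). Qed.

Lemma Ex_ge0 x t (z : T) : -1 <= t <= 1 -> Zset x0 z -> (0 <= ((z.1 == x)%:R * L z.2 t)%:E)%E.
Proof.
move=> Ht Hz; rewrite lee_fin mulr_ge0 ?ind_ge0 //.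
by case/andP: (HL0 _ _ Hz Ht).
Qed.

Lemma Rloss_dec (f : X -> R) : (forall x, -1 <= f x <= 1) ->
  Rloss L M f = (\sum_(x : X) Ex x (f x))%E.
Proof.
move=> Hf; rewrite /Rloss /Ex.
transitivity (\int[M]_(z in Zset x0) (\sum_(x <- index_enum X) ((z.1 == x)%:R * L z.2 (f x))%:E))%E.
  by apply: eq_integral => z _; rewrite sumEFin sum_ind.
rewrite ge0_integral_sum //; first exact: Zset_meas.
- by move=> x; exact: mEx.
- by move=> x z Hz; exact: Ex_ge0.
Qed.

Lemma mass_sum : (\sum_(x : X) mass x)%E = 1%E.
Proof.
transitivity (\int[M]_(z in Zset x0) (\sum_(x <- index_enum X) ((z.1 == x)%:R : R)%:E))%E.
  rewrite ge0_integral_sum //.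
  all: try exact: Zset_meas.
  all: try (by move=> x; exact: mmass).
  all: try (by move=> x z _; rewrite lee_fin ind_ge0).
transitivity (\int[M]_(z in Zset x0) (cst 1%E z))%E.
  apply: eq_integral => z _; rewrite sumEFin (bigD1 (z.1 : X)) //= eqxx big1 ?addr0 // => y Hy.
  by rewrite eq_sym (negbTE Hy).
rewrite (integral_cst _ (@Zset_meas R X x0)) mul1e; exact: HM.
Qed.

Lemma mass_ge0 x : (0 <= mass x)%E.
Proof. by apply: integral_ge0 => z _; rewrite lee_fin ind_ge0. Qed.

Lemma Ex_bnd x t : -1 <= t <= 1 -> (0 <= Ex x t)%E /\ (Ex x t <= 2%:E)%E.
Proof.
move=> Ht; split; first by apply: integral_ge0 => z Hz; exact: Ex_ge0.
apply: (@le_trans _ _ (\int[M]_(z in Zset x0) (cst 2%:E z))%E).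
  apply: ge0_le_integral => //; first exact: Zset_meas.
  - by move=> z Hz; exact: Ex_ge0.
  - exact: mEx.
  - move=> z Hz; rewrite /= lee_fin; have /andP[h1 h2] := HL0 _ _ Hz Ht.
    by case: (z.1 == x); rewrite ?mul1r ?mul0r //.
by rewrite (integral_cst _ (@Zset_meas R X x0)) -[X in (_ * X)%E]/(M (Zset x0)) HM mule1.
Qed.

Lemma mass_le1 x : (mass x <= 1)%E.
Proof.
have <- : (\sum_(y : X) mass y)%E = 1%E by exact: mass_sum.
rewrite (bigD1 x) //= leeDl //.
by apply: sume_ge0 => y _; exact: mass_ge0.
Qed.

Lemma Ex_le x t t' : -1 <= t <= 1 -> -1 <= t' <= 1 ->
  (Ex x t <= Ex x t' + `|t - t'|%:E * mass x)%E.
Proof.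
move=> Ht Ht'; rewrite /Ex /mass.
have mi : measurable_fun (Zset x0) (fun z : T => (((z.1 == x)%:R : R)%:E : \bar R)) by exact: mmass.
have mt' := mEx x t' Ht'.
apply: (@le_trans _ _ (\int[M]_(z in Zset x0) (((z.1 == x)%:R * L z.2 t')%:E + `|t - t'|%:E * ((z.1 == x)%:R)%:E))%E).
  apply: ge0_le_integral => //; first exact: Zset_meas.
  - by move=> z Hz; exact: Ex_ge0.
  - exact: mEx.
  - apply: emeasurable_funD => //; exact: measurable_funeM.
  - move=> z Hz; rewrite -EFinM -EFinD lee_fin.
    have := HLip _ _ _ Hz Ht Ht'; have := ler_norm (L z.2 t - L z.2 t').
    by case: (z.1 == x); rewrite ?mul1r ?mul0r ?mulr1 ?mulr0 ?addr0 //; lra.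
rewrite ge0_integralD //.
all: try exact: Zset_meas.
all: try (by move=> z Hz; exact: Ex_ge0).
all: try (by move=> z _; rewrite mule_ge0 // lee_fin ind_ge0).
all: try exact: measurable_funeM.
rewrite ge0_integralZl //.
all: try exact: Zset_meas.
all: try (by move=> z _; rewrite lee_fin ind_ge0).
Qed.

Definition psi x t := fine (Ex x t).
Definition mu x := fine (mass x).

Lemma Ex_fin x t : -1 <= t <= 1 -> Ex x t = (psi x t)%:E.
Proof.
move=> Ht; rewrite /psi fineK //; have [h1 h2] := Ex_bnd x t Ht.
by rewrite ge0_fin_numE // (le_lt_trans h2) // ltry.
Qed.

Lemma mass_fin x : mass x = (mu x)%:E.
Proof.
rewrite /mu fineK // ge0_fin_numE ?mass_ge0 //.
by rewrite (le_lt_trans (mass_le1 x)) // ltry.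
Qed.

Lemma mu_ge0 x : 0 <= mu x.
Proof. by have := mass_ge0 x; rewrite mass_fin lee_fin. Qed.

Lemma mu_le1 x : mu x <= 1.
Proof. by have := mass_le1 x; rewrite mass_fin lee_fin. Qed.

Lemma mu_sum : \sum_(x : X) mu x = 1.
Proof.
have := mass_sum; under eq_bigr do rewrite mass_fin.
by rewrite sumEFin => -[].
Qed.

Lemma psi_le x t t' : -1 <= t <= 1 -> -1 <= t' <= 1 ->
  psi x t <= psi x t' + `|t - t'| * mu x.
Proof.
move=> Ht Ht'; have := Ex_le x t t' Ht Ht'.
by rewrite (Ex_fin x t Ht) (Ex_fin x t' Ht') mass_fin -EFinM -EFinD lee_fin.
Qed.

Lemma psi_lip x t t' : -1 <= t <= 1 -> -1 <= t' <= 1 ->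
  `|psi x t - psi x t'| <= `|t - t'|.
Proof.
move=> Ht Ht'; have h1 := psi_le x t t' Ht Ht'; have h2 := psi_le x t' t Ht' Ht.
have h3 := mu_ge0 x; have h4 := mu_le1 x.
rewrite distrC in h2.
have h5 : `|t - t'| * mu x <= `|t - t'| by rewrite ler_piMr.
rewrite ler_norml; apply/andP; split; lra.
Qed.

Lemma Rloss_fin (f : X -> R) : (forall x, -1 <= f x <= 1) ->
  Rloss L M f = (\sum_(x : X) psi x (f x))%:E.
Proof.
move=> Hf; rewrite Rloss_dec // -sumEFin; apply: eq_bigr => x _.
exact: Ex_fin (Hf x).
Qed.
End dec.

Section clamp.
Variable R : realType.
Definition clamp (t : R) : R := if t < -1 then -1 else if 1 < t then 1 else t.

Lemma clampE t : clamp t = if t < -1 then -1 else if 1 < t then 1 else t.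
Proof. by []. Qed.

Lemma clamp_in t : -1 <= clamp t <= 1.
Proof.
rewrite clampE; case: ltP => h1; first by apply/andP; split; lra.
by case: ltP => h2; apply/andP; split; lra.
Qed.

Lemma clamp_id t : -1 <= t <= 1 -> clamp t = t.
Proof.
case/andP => h1 h2; rewrite clampE ltNge h1 /= ltNge h2 //.
Qed.

Lemma clamp_lip a b : `|clamp a - clamp b| <= `|a - b|.
Proof.
have n1 := ler_norm (a - b); have n2 := ler_norm (b - a); rewrite distrC in n2.
rewrite !clampE ler_norml.
case: (ltP a (-1)) => ha; case: (ltP b (-1)) => hb;
case: (ltP 1 a) => ha'; case: (ltP 1 b) => hb'; apply/andP; split; lra.
Qed.

Lemma lip_cont (g : R -> R) : (forall a b, `|g a - g b| <= `|a - b|) -> continuous g.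
Proof.
move=> Hg a; apply/cvgrPdist_le => e e0.
exists e => //= b /= Hab.
by apply: le_trans (Hg a b) _; apply: ltW.
Qed.
End clamp.
Arguments clamp {R} t.
Arguments clamp_in {R} t.
Arguments clamp_id {R} t _.
Arguments clamp_lip {R} a b.
Arguments lip_cont {R} g _.

Lemma recip_anti (R : realType) (a b : \bar R) :
  (0 <= a)%E -> (a <= b)%E -> (recip b <= recip a)%E.
Proof.
case: a => [r| |] //; case: b => [s| |] //=.
- rewrite !lee_fin => r0 rs.
  case: (ltP 0 r) => hr; last first.
    by case: ifP => _; rewrite ?leey.
  have hs : 0 < s by apply: lt_le_trans hr rs.
  by rewrite hs lee_fin lef_pV2 // posrE.
- rewrite lee_fin => r0 _; case: ifP => _; last by rewrite leey.
  by rewrite lee_fin invr_ge0.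
Qed.

Lemma cube_set_meas (X : finType) (R : realType) (G : Fn X R -> R) (a : R) :
  measurable_fun [set: Fn X R] G ->
  measurable [set f : Fn X R | cube f /\ G f <= a].
Proof.
move=> mG; have := mG measurableT _ (measurable_itv `]-oo, a]); rewrite setTI => h.
rewrite (_ : [set f | _] = cube `&` G @^-1` `]-oo, a]).
  exact: measurableI (cube_meas X R) h.
by apply/seteqP; split => f /=; rewrite in_itv /=.
Qed.

Section gen.
Variables (R : realType) (X : finType) (x0 : X) (F FP : set (X -> R)).
Hypothesis HFFP : F `<=` FP.
Hypothesis HFP : forall f, FP f -> forall x, -1 <= f x <= 1.
Variable L : R -> R -> R.
Hypothesis HL0 : forall y t, -1 <= y <= 1 -> -1 <= t <= 1 -> 0 <= L y t <= 2.
Hypothesis HLip : forall y t t', -1 <= y <= 1 -> -1 <= t <= 1 -> -1 <= t' <= 1 ->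
        `|L y t - L y t'| <= `|t - t'|.
Hypothesis HLm : forall t : R, -1 <= t <= 1 ->
        measurable_fun (`[-1, 1] : set R) (fun y : R => L y t).
Local Notation psi := (@psi R X x0 L).
Local Notation mu := (@mu R X x0).

Lemma regloss_eq (M : probability (Zty R x0) R) (HM : M (Zset x0) = 1%E) fs :
  F fs -> (forall g, F g -> (Rloss L M fs <= Rloss L M g)%E) ->
  forall f : X -> R, (forall x, -1 <= f x <= 1) ->
  regloss L F M f = (\sum_(x : X) psi M x (f x) - \sum_(x : X) psi M x (fs x))%:E.
Proof.
move=> Ffs Hfs f Hf; rewrite /regloss.
have -> : ereal_inf [set Rloss L M g | g in F] = Rloss L M fs.
  apply/le_anti/andP; split; first by apply: ereal_inf_lbound; exists fs.
  by apply: le_ereal_inf_tmp => _ [g Fg <-]; exact: Hfs.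
rewrite (@Rloss_fin R X x0 L M HL0 HLm HM f Hf) (@Rloss_fin R X x0 L M HL0 HLm HM fs (HFP _ (HFFP _ Ffs))).
by rewrite -EFinB.
Qed.

Lemma part1_gen (Hmin : forall M, agnostic R x0 M ->
        exists fs, F fs /\ forall g, F g -> (Rloss L M fs <= Rloss L M g)%E)
  (Delta : R) :
  (Nfrac_models L F FP (agnostic R x0) Delta <= Nfrac_fun F FP Delta)%E.
Proof.
rewrite /Nfrac_models /Nfrac_fun.
apply: le_ereal_inf_tmp => _ [p Hp <-].
apply: le_trans; first by apply: ereal_inf_lbound; exists p.
apply: ge_ereal_sup => _ [M HM <-].
have [fs [Ffs Hfs]] := Hmin M HM.
have Hfs1 := HFP _ (HFFP _ Ffs).
pose Sf := [set f : Fn X R | cube f /\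
   \sum_(x : X) (mu M, fs).1 x * `|f x - (mu M, fs).2 x| <= Delta].
apply: (@le_trans _ _ (recip (p Sf))); last first.
  apply: ereal_sup_ubound; exists (mu M, fs) => //; split => //=.
  split; [exact: (@mu_ge0 R X x0 M HM) | exact: (@mu_sum R X x0 M HM)].
apply: recip_anti; first exact: measure_ge0.
pose c := \sum_(x : X) psi M x (fs x).
have Hset : [set f : Fn X R | cube f /\ (regloss L F M f <= Delta%:E)%E] =
            [set f : Fn X R | cube f /\ \sum_(x : X) psi M x (clamp (f x)) <= Delta + c].
  apply/seteqP; split => f /= [Hf H]; split => //.
    under eq_bigr do rewrite clamp_id ?Hf //.
    by move: H; rewrite (@regloss_eq M HM fs Ffs Hfs f Hf) lee_fin /c; lra.
  rewrite (@regloss_eq M HM fs Ffs Hfs f Hf) lee_fin.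
  by move: H; under eq_bigr do rewrite clamp_id ?Hf //; rewrite /c; lra.
rewrite Hset; apply: le_measure; rewrite ?inE.
- apply: cube_set_meas; apply: measurable_sum => x /=.
  apply: measurable_funM; first exact: measurable_cst.
  apply: measurableT_comp; first exact: normr_measurable.
  by apply: measurable_funB; [exact: ev_meas | exact: measurable_cst].
- apply: cube_set_meas; apply: measurable_sum => x.
  apply: (measurableT_comp (f := fun t => psi M x (clamp t))); last exact: ev_meas.
  apply: continuous_measurable_fun; apply: lip_cont => a b.
  apply: le_trans (clamp_lip a b).
  exact: (@psi_lip R X x0 L M HL0 HLip HLm HM x _ _ (clamp_in a) (clamp_in b)).
- move=> f /= [Hf H]; split => //.
  under eq_bigr do rewrite clamp_id ?Hf //.
  rewrite /c; have : \sum_(x : X) psi M x (f x) <=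
      \sum_(x : X) (psi M x (fs x) + `|f x - fs x| * mu M x).
    by apply: ler_sum => x _; exact: (@psi_le R X x0 L M HL0 HLip HLm HM x _ _ (Hf x) (Hfs1 x)).
  rewrite big_split /=.
  have -> : \sum_(x : X) `|f x - fs x| * mu M x = \sum_(x : X) mu M x * `|f x - fs x|.
    by apply: eq_bigr => x _; rewrite mulrC.
  lra.
Qed.
End gen.

Lemma reindexX (X : finType) (x0 : X) (V : Type) (idx : V) (op : Monoid.com_law idx)
  (G : X -> V) :
  \big[op/idx]_(k < #|X|) G (nth x0 (enum X) k) = \big[op/idx]_(x : X) G x.
Proof.
rewrite -(big_mkord xpredT (fun k => G (nth x0 (enum X) k))) cardE -(@big_nth _ _ _ _ x0 (enum X) xpredT G).
by rewrite big_enum.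
Qed.

Section disc.
Variables (R : realType) (X : finType) (x0 : X) (w fs : X -> R).
Variable Hw : simplex w.

Definition enX k := nth x0 (enum X) k.
Definition pt k : Zty R x0 := (enX k, fs (enX k)).
Definition mk : {measure set (Zty R x0) -> \bar R}^nat :=
  fun k => mscale (`|w (enX k)|)%:nng (\d_(pt k)).
Definition Mdisc (_ : simplex w) := msum mk #|X|.

HB.instance Definition _ := Measure.on (Mdisc Hw).

Lemma Mdisc_val A : Mdisc Hw A = (\sum_(x : X) (w x)%:E * \d_((x, fs x) : Zty R x0) A)%E.
Proof.
rewrite /Mdisc /msum /mk /mscale /=.
rewrite (@reindexX X x0 _ _ _ (fun x => (`|w x|)%:E * \d_((x, fs x) : Zty R x0) A)%E).
apply: eq_bigr => x _; rewrite ger0_norm //; by case: Hw.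
Qed.

Lemma Mdisc_setT : Mdisc Hw setT = 1%E.
Proof.
rewrite Mdisc_val; under eq_bigr do rewrite diracE mem_set // mule1.
by rewrite sumEFin; case: Hw => _ ->.
Qed.

HB.instance Definition _ := @Measure_isProbability.Build _ _ R (Mdisc Hw) Mdisc_setT.

End disc.

Section disc2.
Variables (R : realType) (X : finType) (x0 : X) (w fs : X -> R).
Variable Hw : simplex w.
Hypothesis Hfs : forall x, -1 <= fs x <= 1.
Local Notation M := (@Mdisc R X x0 w fs Hw : probability (Zty R x0) R).

Lemma Mdisc_agn : agnostic R x0 M.
Proof.
rewrite /agnostic /= Mdisc_val.
rewrite (eq_bigr (fun x => (w x)%:E)); last first.
  by move=> x _; rewrite diracE mem_set ?mule1 //; exact: Hfs.
by rewrite sumEFin; case: Hw => _ ->.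
Qed.

Lemma Mdisc_real (F : set (X -> R)) : F fs -> realizable x0 F M.
Proof.
move=> Ffs; split; first exact: Mdisc_agn.
exists fs; split => //; rewrite /= Mdisc_val.
rewrite (eq_bigr (fun x => (w x)%:E)); last first.
  by move=> x _; rewrite diracE mem_set ?mule1.
by rewrite sumEFin; case: Hw => _ ->.
Qed.

Lemma mabs (g : X -> R) : measurable_fun (Zset x0)
  (fun z : Zty R x0 => ((`|z.2 - g z.1|)%:E : \bar R)).
Proof.
apply/measurable_EFinP; apply: measurableT_comp; first exact: normr_measurable.
apply: measurable_funB; first exact: measurable_funTS measurable_snd.
exact: (@fst_meas R X x0 _ g).
Qed.

Lemma Rloss_Mdisc (g : X -> R) :
  Rloss (fun y t => `|y - t|) M g = (\sum_(x : X) w x * `|fs x - g x|)%:E.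
Proof.
rewrite /Rloss /= /Mdisc (ge0_integral_measure_sum _ (@Zset_meas R X x0) _ (mabs g)); last first.
  by move=> z _; rewrite lee_fin.
rewrite -sumEFin -(@reindexX X x0 _ _ _ (fun x => (w x * `|fs x - g x|)%:E)).
apply: eq_bigr => k _; rewrite /mk (ge0_integral_mscale _ (@Zset_meas R X x0) _ (mabs g)); last first.
  by move=> z _; rewrite lee_fin.
rewrite (integral_dirac _ (@Zset_meas R X x0) (mabs g)).
rewrite diracE mem_set /=; last exact: Hfs.
rewrite mul1e -EFinM ger0_norm //; last by case: Hw.
Qed.
End disc2.

Theorem mainTheorem19 (R : realType) (X : finType) (x0 : X)
  (F FP : set (X -> R))
  (HFFP : F `<=` FP)
  (HFP : forall f, FP f -> forall x, -1 <= f x <= 1) :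
  (forall L : R -> R -> R,
     (forall y t, -1 <= y <= 1 -> -1 <= t <= 1 -> 0 <= L y t <= 1) ->
     (forall y t t', -1 <= y <= 1 -> -1 <= t <= 1 -> -1 <= t' <= 1 ->
        `|L y t - L y t'| <= `|t - t'|) ->
     (forall t : R, -1 <= t <= 1 ->
        measurable_fun (`[-1, 1] : set R) (fun y : R => L y t)) ->
     (forall M, agnostic R x0 M ->
        exists fs, F fs /\ forall g, F g -> (Rloss L M fs <= Rloss L M g)%E) ->
     forall Delta : R, 0 < Delta ->
       (Nfrac_models L F FP (agnostic R x0) Delta <= Nfrac_fun F FP Delta)%E)
  /\
  (let Labs := fun y t : R => `|y - t| in
   (forall M, agnostic R x0 M ->
      exists fs, F fs /\ forall g, F g -> (Rloss Labs M fs <= Rloss Labs M g)%E) ->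
   forall Delta : R, 0 < Delta ->
     Nfrac_models Labs F FP (agnostic R x0) Delta
       = Nfrac_models Labs F FP (realizable x0 F) Delta /\
     Nfrac_models Labs F FP (realizable x0 F) Delta = Nfrac_fun F FP Delta).
Proof.
split.
  move=> L HL0 HLip HLm Hmin Delta _.
  apply: (@part1_gen R X x0 F FP HFFP HFP L _ HLip HLm Hmin Delta).
  move=> y t Hy Ht; have /andP[h1 h2] := HL0 y t Hy Ht.
  by apply/andP; split => //; lra.
move=> Labs Hmin Delta _.
have HL0 : forall y t, -1 <= y <= 1 -> -1 <= t <= 1 -> 0 <= Labs y t <= 2.
  move=> y t /andP[h1 h2] /andP[h3 h4]; rewrite /Labs normr_ge0 /= ler_norml.
  by apply/andP; split; lra.
have HLip : forall y t t', -1 <= y <= 1 -> -1 <= t <= 1 -> -1 <= t' <= 1 ->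
        `|Labs y t - Labs y t'| <= `|t - t'|.
  move=> y t t' _ _ _; rewrite /Labs.
  apply: le_trans (ler_dist_dist _ _) _.
  have -> : (y - t) - (y - t') = t' - t by rewrite opprB addrC addrA subrK.
  by rewrite distrC.
have HLm : forall t : R, -1 <= t <= 1 ->
        measurable_fun (`[-1, 1] : set R) (fun y : R => Labs y t).
  move=> t _; rewrite /Labs; apply: measurableT_comp; first exact: normr_measurable.
  by apply: measurable_funB; [exact: measurable_id | exact: measurable_cst].
have h1 := @part1_gen R X x0 F FP HFFP HFP Labs HL0 HLip HLm Hmin Delta.
have h2 : (Nfrac_models Labs F FP (realizable x0 F) Delta <=
           Nfrac_models Labs F FP (agnostic R x0) Delta)%E.
  rewrite /Nfrac_models; apply: le_ereal_inf_tmp => _ [p Hp <-].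
  apply: le_trans; first by apply: ereal_inf_lbound; exists p.
  apply: ge_ereal_sup => _ [M HM <-]; apply: ereal_sup_ubound.
  by exists M => //; case: HM.
have h3 : (Nfrac_fun F FP Delta <=
           Nfrac_models Labs F FP (realizable x0 F) Delta)%E.
  rewrite /Nfrac_models /Nfrac_fun; apply: le_ereal_inf_tmp => _ [p Hp <-].
  apply: le_trans; first by apply: ereal_inf_lbound; exists p.
  apply: ge_ereal_sup => _ [[w fs] /= [Hw Ffs] <-].
  have Hfs := HFP _ (HFFP _ Ffs).
  apply: ereal_sup_ubound.
  exists (@Mdisc R X x0 w fs Hw); first exact: Mdisc_real.
  have Hinf : ereal_inf [set Rloss Labs (@Mdisc R X x0 w fs Hw) g | g in F] = 0%E.
    apply/le_anti/andP; split.
      apply: le_trans; first by apply: ereal_inf_lbound; exists fs.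
      by rewrite /Labs Rloss_Mdisc // lee_fin; rewrite big1 // => x _; rewrite subrr normr0 mulr0.
    apply: le_ereal_inf_tmp => _ [g Fg <-].
    rewrite /Labs Rloss_Mdisc // lee_fin; apply: sumr_ge0 => x _.
    by apply: mulr_ge0 => //; case: Hw.
  congr (recip (p _)); apply/seteqP; split => f /= [Hf H]; split => //.
    move: H; rewrite /regloss Hinf sube0 /Labs Rloss_Mdisc // lee_fin.
    by under eq_bigr do rewrite distrC.
  rewrite /regloss Hinf sube0 /Labs Rloss_Mdisc // lee_fin.
  by under eq_bigr do rewrite distrC.
split; apply/le_anti; rewrite ?h2 /=.
  by rewrite (le_trans h1 h3).
by rewrite h3 (le_trans h2 h1).
Qed.
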